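(* For every $x\in\Gamma^\circ$ and $i\in\{0,1\}$, the map $(s,t)\mapsto\Psi_i^{(s,t)}(x)$ is a diffeomorphism from $R_i(x)$ onto its image $\Psi_i^{R_i(x)}(x)$, and from $L_i(x)$ onto its image $\Psi_i^{L_i(x)}(x)$.
   Context: Fix $\alpha>\beta>0$. For $i\in\{0,1\}$ let $\Phi_i^t(x_1,x_2)=(i+(x_1-i)e^{-\alpha t},\, i+(x_2-i)e^{-\beta t})$ ($t\in\mathbb{R}$) and $\Psi_i^t=\Phi_i^{-t}$. For $s,t>0$ set $\Psi_i^{(s,t)}=(\Phi_i^t\circ\Phi_{1-i}^s)^{-1}=\Psi_{1-i}^s\circ\Psi_i^t$. Let $\Gamma=\{(x_1,x_2): 0\le x_2\le1,\ x_2^{\alpha/\beta}\le x_1\le 1-(1-x_2)^{\alpha/\beta}\}$, $\Gamma^\circ$ its interior, $\Gamma_r=\{x\in\Gamma^\circ: x_1>x_2\}$, $\Gamma_l=\{x\in\Gamma^\circ:x_1<x_2\}$. For $x\in\Gamma^\circ$ let $T_i^2(x)=\{(s,t)\in(0,\infty)^2:\Psi_i^{(s,t)}(x)\in\Gamma^\circ\}$, $R_i(x)=\{(s,t)\in T_i^2(x):\Psi_i^t(x)\in\Gamma_r\}$ and $L_i(x)=\{(s,t)\in T_i^2(x):\Psi_i^t(x)\in\Gamma_l\}$; $\Psi_i^{A}(x)$ denotes $\{\Psi_i^{(s,t)}(x):(s,t)\in A\}$. *)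

(* Defs.v *)
From HB Require Import structures.
From mathcomp Require Import all_boot all_order all_algebra.
From mathcomp Require Import all_classical all_reals all_analysis.
Set Implicit Arguments. Unset Strict Implicit. Unset Printing Implicit Defensive.
Import Order.TTheory GRing.Theory Num.Theory.
Import numFieldNormedType.Exports.
Local Open Scope classical_set_scope.
Local Open Scope ring_scope.

Section Defs.
Variable R : realType.
Implicit Types (a b : R) (x : R * R) (i : bool).

Definition vtx i : R := (i : nat)%:R.

(* Psi_i^t = Phi_i^{-t} *)
Definition Psi a b i (t : R) x : R * R :=
  (vtx i + (x.1 - vtx i) * expR (a * t), vtx i + (x.2 - vtx i) * expR (b * t)).

Definition Psi2 a b i (s t : R) x : R * R := Psi a b (~~ i) s (Psi a b i t x).

Definition Gamma a b : set (R * R) :=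
  [set y | 0 <= y.2 <= 1 /\ y.2 `^ (a / b) <= y.1 /\ y.1 <= 1 - (1 - y.2) `^ (a / b)].

Definition Gamma_r a b : set (R * R) := [set y | interior (Gamma a b) y /\ y.2 < y.1].
Definition Gamma_l a b : set (R * R) := [set y | interior (Gamma a b) y /\ y.1 < y.2].

Definition T2 a b i x : set (R * R) :=
  [set st | 0 < st.1 /\ 0 < st.2 /\ interior (Gamma a b) (Psi2 a b i st.1 st.2 x)].
Definition Rset a b i x : set (R * R) :=
  [set st | T2 a b i x st /\ Gamma_r a b (Psi a b i st.2 x)].
Definition Lset a b i x : set (R * R) :=
  [set st | T2 a b i x st /\ Gamma_l a b (Psi a b i st.2 x)].

Fixpoint iter_dir (f : R * R -> R * R) (vs : seq (R * R)) : R * R -> R * R :=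
  match vs with
  | [::] => f
  | v :: vs' => fun y => 'D_v (iter_dir f vs') y
  end.

Definition smooth_on (U : set (R * R)) (f : R * R -> R * R) : Prop :=
  forall vs, (forall y, U y -> {for y, continuous (iter_dir f vs)}) /\
             (forall v y, U y -> derivable (iter_dir f vs) y v).

Definition diffeo_onto (A : set (R * R)) (F : R * R -> R * R) : Prop :=
  [/\ open A, open (F @` A),
      (forall p q, A p -> A q -> F p = F q -> p = q),
      smooth_on A F &
      exists G : R * R -> R * R,
        [/\ (forall p, A p -> G (F p) = p),
            (forall y, (F @` A) y -> F (G y) = y) &
            smooth_on (F @` A) G]].

End Defs.

(* Main.v *)
Require Import Defs.
From HB Require Import structures.
From mathcomp Require Import all_boot all_order all_algebra.
From mathcomp Require Import all_classical all_reals all_analysis.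
From mathcomp Require Import ring lra.
Import Order.TTheory GRing.Theory Num.Theory.
Import numFieldNormedType.Exports.
Local Open Scope classical_set_scope.
Local Open Scope ring_scope.

Set Implicit Arguments. Unset Strict Implicit. Unset Printing Implicit Defensive.

Section Frame.
Variable R : realType.

Fixpoint Ck {V W : normedModType R} (n : nat) (U : set V) (f : V -> W) : Prop :=
  (forall y, U y -> {for y, continuous f} /\ forall v, derivable f y v) /\
  match n with 0 => True | m.+1 => forall v, Ck m U ('D_v f) end.

Lemma Ck_base {V W : normedModType R} n (U : set V) (f : V -> W) y :
  Ck n U f -> U y -> {for y, continuous f} /\ forall v, derivable f y v.
Proof. by case: n => [|n] [H _]; apply: H. Qed.

Lemma Ck_mono {V W : normedModType R} n (U : set V) (f : V -> W) :
  Ck n.+1 U f -> Ck n U f.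
Proof.
elim: n f => [|n IH] f [H1 H2]; first by split.
by split => // v; apply: IH; apply: H2.
Qed.

Lemma Ck_sub {V W : normedModType R} n (U U' : set V) (f : V -> W) :
  U' `<=` U -> Ck n U f -> Ck n U' f.
Proof.
move=> sUU; elim: n f => [|n IH] f [H1 H2].
  by split => // y /sUU /H1.
split => [y /sUU /H1 //|v]; exact: IH (H2 v).
Qed.

Lemma Ck_local {V W : normedModType R} n (U : set V) (f g : V -> W) :
  open U -> (forall y, U y -> f y = g y) -> Ck n U f -> Ck n U g.
Proof.
move=> oU; elim: n f g => [|n IH] f g fg [H1 H2].
- split => // y Uy; have [cf df] := H1 y Uy.
  have nfg : {near y, f =1 g}.
    by apply: filterS (open_nbhs_nbhs (conj oU Uy)) => z /fg.
  split => [|v]; last exact: near_eq_derivable (df v).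
  apply: cvg_trans (near_eq_cvg nfg) _.
  by rewrite -(fg y Uy).
- split.
  + move=> y Uy; have [cf df] := H1 y Uy.
    have nfg : {near y, f =1 g}.
      by apply: filterS (open_nbhs_nbhs (conj oU Uy)) => z /fg.
    split => [|v]; last exact: near_eq_derivable (df v).
    apply: cvg_trans (near_eq_cvg nfg) _.
    by rewrite -(fg y Uy).
  + move=> v; apply: (IH ('D_v f)) (H2 v) => y Uy.
    apply: near_eq_derive.
    by apply: filterS (open_nbhs_nbhs (conj oU Uy)) => z /fg.
Qed.

End Frame.
Section Frame2.
Variable R : realType.

Lemma Ck_ext {V W : normedModType R} n (U : set V) (f g : V -> W) :
  (forall y, f y = g y) -> Ck n U f -> Ck n U g.
Proof. by move=> fg; have -> : g = f by apply/funext => y; rewrite fg. Qed.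

Lemma Ck_cst {V W : normedModType R} n (U : set V) (a : W) :
  Ck n U (fun _ => a).
Proof.
elim: n a => [|n IH] a.
  by split => // y _; split => [|v]; [exact: cvg_cst|exact: derivable_cst].
split; first by move=> y _; split => [|v]; [exact: cvg_cst|exact: derivable_cst].
move=> v; apply: (Ck_ext (f := fun _ => 0)) (IH 0) => y.
by rewrite derive_cst.
Qed.

Lemma Ck_add {V W : normedModType R} n (U : set V) (f g : V -> W) :
  open U -> Ck n U f -> Ck n U g -> Ck n U (fun y => f y + g y).
Proof.
move=> oU; elim: n f g => [|n IH] f g Cf Cg.
  split => // y Uy; have [cf df] := Ck_base Cf Uy; have [cg dg] := Ck_base Cg Uy.
  split => [|v]; first exact: continuousD.
  exact: derivableD.
split.
  move=> y Uy; have [cf df] := Ck_base Cf Uy; have [cg dg] := Ck_base Cg Uy.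
  split => [|v]; first exact: continuousD.
  exact: derivableD.
move=> v; apply: (Ck_local (f := fun y => 'D_v f y + 'D_v g y)) => //.
  move=> y Uy; have [cf df] := Ck_base Cf Uy; have [cg dg] := Ck_base Cg Uy.
  by rewrite (deriveD (df v) (dg v)).
by apply: IH; [case: Cf => _; apply | case: Cg => _; apply].
Qed.

Lemma Ck_mul {V : normedModType R} n (U : set V) (f g : V -> R) :
  open U -> Ck n U f -> Ck n U g -> Ck n U (fun y => f y * g y).
Proof.
move=> oU; elim: n f g => [|n IH] f g Cf Cg.
  split => // y Uy; have [cf df] := Ck_base Cf Uy; have [cg dg] := Ck_base Cg Uy.
  split => [|v]; first exact: continuousM.
  exact: (derivableM (df v) (dg v)).
split.
  move=> y Uy; have [cf df] := Ck_base Cf Uy; have [cg dg] := Ck_base Cg Uy.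
  split => [|v]; first exact: continuousM.
  exact: (derivableM (df v) (dg v)).
move=> v; apply: (Ck_local (f := fun y => f y * 'D_v g y + g y * 'D_v f y)) => //.
  move=> y Uy; have [cf df] := Ck_base Cf Uy; have [cg dg] := Ck_base Cg Uy.
  by rewrite -(deriveM (df v) (dg v)).
apply: Ck_add => //; apply: IH.
- exact: Ck_mono.
- by case: Cg => _; apply.
- exact: Ck_mono.
- by case: Cf => _; apply.
Qed.

Lemma derive_line {V W : normedModType R} (f : V -> W) y v :
  'D_v f y = 'D_1 (fun h : R => f (h *: v + y)) 0.
Proof.
rewrite /derive; set g1 := fun h => _; set g2 := fun h => _.
suff -> : g1 = g2 by [].
by apply/funext => h; rewrite /g1 /g2 /= scale0r add0r addr0 [_%:A]mulr1.
Qed.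

Lemma derive_comp1 {V : normedModType R} (f : V -> R) (phi : R -> R) y v :
  derivable f y v -> derivable phi (f y) 1 ->
  derivable (phi \o f) y v /\ 'D_v (phi \o f) y = 'D_1 phi (f y) * 'D_v f y.
Proof.
move=> /derivable1P df dphi.
have e0 : f (0 *: v + y) = f y by rewrite scale0r add0r.
have H1 : is_derive ((fun h : R => f (h *: v + y)) 0) 1 phi ('D_1 phi (f y)).
  by rewrite /= e0; apply: derivableP.
have H := @is_derive1_comp R phi (fun h : R => f (h *: v + y)) 0 _ _ H1 (derivableP df).
split.
  by apply/derivable1P; case: H.
by rewrite derive_line (@derive_val _ _ _ _ _ _ _ H) -derive_line.
Qed.

End Frame2.
Section Frame3.
Variable R : realType.

Lemma Ck_comp1 {V : normedModType R} n (I : set R) (U : set V) (phi : R -> R) (f : V -> R) :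
  open I -> open U -> (forall y, U y -> I (f y)) ->
  Ck n I phi -> Ck n U f -> Ck n U (fun y => phi (f y)).
Proof.
move=> oI oU fUI; elim: n phi f fUI => [|n IH] phi f fUI Cphi Cf.
  split => // y Uy; have [cf df] := Ck_base Cf Uy.
  have [cp dp] := Ck_base Cphi (fUI y Uy).
  split => [|v]; first exact: (continuous_comp cf cp).
  by have [] := derive_comp1 (df v) (dp 1).
split.
  move=> y Uy; have [cf df] := Ck_base Cf Uy.
  have [cp dp] := Ck_base Cphi (fUI y Uy).
  split => [|v]; first exact: (continuous_comp cf cp).
  by have [] := derive_comp1 (df v) (dp 1).
move=> v; apply: (Ck_local (f := fun y => 'D_1 phi (f y) * 'D_v f y)) => //.
  move=> y Uy; have [cf df] := Ck_base Cf Uy.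
  have [cp dp] := Ck_base Cphi (fUI y Uy).
  by have [_ ->] := derive_comp1 (df v) (dp 1).
apply: Ck_mul => //.
  apply: (IH (fun t => 'D_1 phi t) f) => //; first by case: Cphi => _; apply.
  exact: Ck_mono.
by case: Cf => _; apply.
Qed.

Lemma Ck0_1D (I : set R) (phi : R -> R) :
  open I -> (forall t, I t -> derivable phi t 1) ->
  (forall t, I t -> {for t, continuous phi} /\ forall v, derivable phi t v).
Proof.
move=> oI dp t It; have /derivable1_diffP H := dp t It.
split; first exact: differentiable_continuous.
by move=> v; apply: diff_derivable.
Qed.

Lemma Ck_1D n (I : set R) (phi : R -> R) :
  open I -> (forall t, I t -> derivable phi t 1) ->
  Ck n I ('D_1 phi) -> Ck n.+1 I phi.
Proof.
move=> oI dp C1; split; first exact: Ck0_1D.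
move=> v; apply: (Ck_local (f := fun t => v * 'D_1 phi t)) => //.
  move=> t It; have /derivable1_diffP H := dp t It.
  by rewrite [RHS]deriveE // diff1E // derive1E.
by apply: Ck_mul => //; apply: Ck_cst.
Qed.

Lemma Ck_id n (I : set R) : open I -> Ck n I (fun t : R => t).
Proof.
move=> oI; elim: n => [|n IH].
  split => // t It; split => [|v]; first exact: cvg_id.
  exact: derivable_id.
apply: Ck_1D => //; try by move=> t _; exact: derivable_id.
apply: (Ck_ext (f := fun _ : R => (1 : R))); last exact: Ck_cst.
by move=> t; rewrite derive_id.
Qed.

Lemma Ck_opp {V : normedModType R} n (U : set V) (f : V -> R) :
  open U -> Ck n U f -> Ck n U (fun y => - f y).
Proof.
move=> oU Cf; apply: (Ck_ext (f := fun y => (-1) * f y)).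
  by move=> y; rewrite mulN1r.
by apply: Ck_mul => //; apply: Ck_cst.
Qed.

Lemma Ck_sub2 {V : normedModType R} n (U : set V) (f g : V -> R) :
  open U -> Ck n U f -> Ck n U g -> Ck n U (fun y => f y - g y).
Proof. by move=> oU Cf Cg; apply: Ck_add => //; apply: Ck_opp. Qed.

Lemma Ck_expR n : Ck n setT (@expR R).
Proof.
elim: n => [|n IH].
  split => // t Tt; apply: (Ck0_1D openT) => // s _.
apply: Ck_1D; [exact: openT| by move=> t _; exact: derivable_expR | ].
apply: (Ck_ext (f := expR)) IH => t.
by rewrite (@derive_val _ _ _ _ _ _ _ (is_derive_expR t)).
Qed.

Definition nz : set R := [set t | t != 0].
Lemma open_nz : open nz.
Proof.
rewrite /nz; have -> : [set t : R | t != 0] = ~` [set 0] by apply/seteqP; split => t /= /eqP.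
exact/closed_openC/closed_eq.
Qed.

Lemma Ck_inv n : Ck n nz (fun t : R => t^-1).
Proof.
have dinv (t : R) : t != 0 -> is_derive t (1:R) (fun s : R => s^-1) (- t ^- 2 *: (1:R)).
  by move=> tn0; apply: (@is_deriveV R id).
elim: n => [|n IH].
  split => // t It; apply: (Ck0_1D open_nz) It => s Is.
  by case: (dinv s Is).
apply: Ck_1D; [exact: open_nz | by move=> s Is; case: (dinv s Is) | ].
apply: (Ck_local (f := fun t : R => - (t^-1 * t^-1))); first exact: open_nz.
  move=> t It; rewrite (@derive_val _ _ _ _ _ _ _ (dinv t It)).
  by rewrite [_ *: 1]mulr1 expr2 invfM.
by apply: Ck_opp; [exact: open_nz | apply: Ck_mul => //; exact: open_nz].
Qed.

Definition pos : set R := [set t | 0 < t].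
Lemma open_pos : open pos.
Proof. exact: open_gt. Qed.

Lemma Ck_ln n : Ck n pos (@ln R).
Proof.
case: n => [|n].
  split => // t It; apply: (Ck0_1D open_pos) It => s Is.
  by case: (is_derive1_ln Is).
apply: Ck_1D; [exact: open_pos | by move=> s Is; case: (is_derive1_ln Is) | ].
apply: (Ck_local (f := fun t : R => t^-1)); first exact: open_pos.
  by move=> t It; rewrite (@derive_val _ _ _ _ _ _ _ (is_derive1_ln It)).
by apply: Ck_sub (Ck_inv n) => t; rewrite /pos /nz /= => /gt_eqF ->.
Qed.

End Frame3.
Section Frame4.
Variable R : realType.

Lemma derive_pair {V : normedModType R} (f g : V -> R) y v :
  derivable f y v -> derivable g y v ->
  derivable (fun y => (f y, g y)) y v /\
  'D_v (fun y => (f y, g y)) y = ('D_v f y, 'D_v g y).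
Proof.
move=> df dg.
have H : (fun h : R => h^-1 *: (((fun y => (f y, g y)) \o shift y) (h *: v) - (f y, g y)))
   @ 0^' --> ('D_v f y, 'D_v g y).
  have -> : (fun h : R => h^-1 *: (((fun y => (f y, g y)) \o shift y) (h *: v) - (f y, g y))) =
     (fun h : R => (h^-1 *: (f (h *: v + y) - f y), h^-1 *: (g (h *: v + y) - g y))) by [].
  by apply: (@cvg_pair _ _ _ _ (nbhs ('D_v f y)) (nbhs ('D_v g y))); [exact: df | exact: dg].
split; first by apply/cvg_ex; eexists; exact: H.
exact: cvg_lim H.
Qed.

Lemma Ck_pair {V : normedModType R} n (U : set V) (f g : V -> R) :
  open U -> Ck n U f -> Ck n U g -> Ck n U (fun y => (f y, g y)).
Proof.
move=> oU; elim: n f g => [|n IH] f g Cf Cg.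
  split => // y Uy; have [cf df] := Ck_base Cf Uy; have [cg dg] := Ck_base Cg Uy.
  split => [|v]; first exact: (@cvg_pair _ _ _ _ (nbhs (f y)) (nbhs (g y))) cf cg.
  by have [] := derive_pair (df v) (dg v).
split.
  move=> y Uy; have [cf df] := Ck_base Cf Uy; have [cg dg] := Ck_base Cg Uy.
  split => [|v]; first exact: (@cvg_pair _ _ _ _ (nbhs (f y)) (nbhs (g y))) cf cg.
  by have [] := derive_pair (df v) (dg v).
move=> v; apply: (Ck_local (f := fun y => ('D_v f y, 'D_v g y))) => //.
  move=> y Uy; have [cf df] := Ck_base Cf Uy; have [cg dg] := Ck_base Cg Uy.
  by have [_ ->] := derive_pair (df v) (dg v).
by apply: IH; [case: Cf => _; apply | case: Cg => _; apply].
Qed.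

Lemma derive_fst (p v : R * R) : derivable (fun q : R * R => q.1) p v /\ 'D_v (fun q : R * R => q.1) p = v.1.
Proof.
have H : (fun h : R => h^-1 *: (((fun q : R * R => q.1) \o shift p) (h *: v) - p.1)) @ 0^' --> v.1.
  have E : {near 0^', (fun _ => v.1) =1 (fun h : R => h^-1 *: (((fun q : R * R => q.1) \o shift p) (h *: v) - p.1))}.
    near=> h => /=.
    have hn0 : h != 0 by near: h; exact: nbhs_dnbhs_neq.
    by rewrite addrK /GRing.scale /= mulKf.
  exact: cvg_trans (near_eq_cvg E) (cvg_cst _).
split; first by apply/cvg_ex; eexists; exact: H.
exact: cvg_lim H.
Unshelve. all: by end_near.
Qed.

Lemma derive_snd (p v : R * R) : derivable (fun q : R * R => q.2) p v /\ 'D_v (fun q : R * R => q.2) p = v.2.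
Proof.
have H : (fun h : R => h^-1 *: (((fun q : R * R => q.2) \o shift p) (h *: v) - p.2)) @ 0^' --> v.2.
  have E : {near 0^', (fun _ => v.2) =1 (fun h : R => h^-1 *: (((fun q : R * R => q.2) \o shift p) (h *: v) - p.2))}.
    near=> h => /=.
    have hn0 : h != 0 by near: h; exact: nbhs_dnbhs_neq.
    by rewrite addrK /GRing.scale /= mulKf.
  exact: cvg_trans (near_eq_cvg E) (cvg_cst _).
split; first by apply/cvg_ex; eexists; exact: H.
exact: cvg_lim H.
Unshelve. all: by end_near.
Qed.

Lemma cont_fst (y : R * R) : {for y, continuous (fun q : R * R => q.1)}.
Proof. case: y => a b. exact: (@cvg_fst _ _ (nbhs a) (nbhs b) _). Qed.
Lemma cont_snd (y : R * R) : {for y, continuous (fun q : R * R => q.2)}.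
Proof. case: y => a b. exact: (@cvg_snd _ _ (nbhs a) (nbhs b) _). Qed.

Lemma Ck_fst n (U : set (R * R)) : Ck n U (fun q : R * R => q.1).
Proof.
case: n => [|n].
  split; last done; move=> y _; split => [|v]; [exact: cont_fst | by case: (derive_fst y v)].
split; first by move=> y _; split => [|v]; [exact: cont_fst | by case: (derive_fst y v)].
move=> v; apply: (Ck_ext (f := fun _ => v.1)); last exact: Ck_cst.
by move=> y; case: (derive_fst y v).
Qed.

Lemma Ck_snd n (U : set (R * R)) : Ck n U (fun q : R * R => q.2).
Proof.
case: n => [|n].
  split; last done; move=> y _; split => [|v]; [exact: cont_snd | by case: (derive_snd y v)].
split; first by move=> y _; split => [|v]; [exact: cont_snd | by case: (derive_snd y v)].
move=> v; apply: (Ck_ext (f := fun _ => v.2)); last exact: Ck_cst.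
by move=> y; case: (derive_snd y v).
Qed.

Lemma smooth_of_Ck (U : set (R * R)) (F : R * R -> R * R) :
  (forall n, Ck n U F) -> smooth_on U F.
Proof.
move=> CF.
have H : forall vs n, Ck n U (iter_dir F vs).
  elim => [|v vs IH] n //=.
  by have [_ H2] := IH n.+1; exact: H2 v.
move=> vs; split => [y Uy|v y Uy]; have [c d] := Ck_base (H vs 0%N) Uy => //.
Qed.

End Frame4.
Section Frame5.
Variable R : realType.

Lemma open_interval_pt (I : set R) t : open I -> I t ->
  exists d, 0 < d /\ I (t - d) /\ I (t + d).
Proof.
move=> oI It.
have /nbhs_ballP [e /= e0 H] := open_nbhs_nbhs (conj oI It).
exists (e / 2); split; first by rewrite divr_gt0.
have he : e / 2 < e by rewrite ltr_pdivrMr // ltr_pMr // ltr1n.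
split; apply: H; rewrite /ball /=.
  by rewrite opprB addrC subrK ger0_norm ?divr_ge0 // ltW.
by rewrite opprD addrA subrr sub0r normrN ger0_norm ?divr_ge0 // ltW.
Qed.

Lemma inv1D (I : set R) (phi : R -> R) :
  open I -> (forall t u w, I t -> I w -> t <= u -> u <= w -> I u) ->
  (forall n, Ck n I phi) -> (forall t, I t -> 'D_1 phi t < 0) ->
  exists h : R -> R, [/\ open (phi @` I), (forall t, I t -> h (phi t) = t) &
     forall n, Ck n (phi @` I) h].
Proof.
move=> oI cvx Cphi neg.
have dphi t : I t -> derivable phi t 1 by move=> It; exact: (Ck_base (Cphi 0%N) It).2.
have cphi t : I t -> {for t, continuous phi} by move=> It; exact: (Ck_base (Cphi 0%N) It).1.
have cwithin t u : I t -> I u -> {within `[t, u], continuous phi}.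
  move=> It Iu; apply: continuous_in_subspaceT => x; rewrite inE /= in_itv /= => /andP[tx xu].
  exact: cphi (cvx _ _ _ It Iu tx xu).
have decr t u : I t -> I u -> t < u -> phi u < phi t.
  move=> It Iu tu; apply: (ltr0_derive1_decr (a:=t) (b:=u)) => //.
  - move=> x; rewrite in_itv /= => /andP[tx xu]; apply: dphi.
    exact: (cvx _ _ _ It Iu (ltW tx) (ltW xu)).
  - move=> x; rewrite in_itv /= => /andP[tx xu]; rewrite derive1E; apply: neg.
    exact: (cvx _ _ _ It Iu (ltW tx) (ltW xu)).
  - exact: cwithin.
have inj t u : I t -> I u -> phi t = phi u -> t = u.
  move=> It Iu ptu; case: (ltgtP t u) => // tu.
    by have := decr _ _ It Iu tu; rewrite ptu ltxx.
  by have := decr _ _ Iu It tu; rewrite ptu ltxx.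
pose h k := if pselect (exists t, I t /\ phi t = k) is left e then projT1 (cid e) else 0.
have hP k : (phi @` I) k -> I (h k) /\ phi (h k) = k.
  case=> t It ptk; rewrite /h; case: pselect => [e|ne]; first by case: (cid e).
  by exfalso; apply: ne; exists t.
have hK t : I t -> h (phi t) = t.
  move=> It; have [Ih ph] := hP (phi t) (ex_intro2 _ _ t It erefl).
  exact: inj.
have oimg : open (phi @` I).
  rewrite openE => k [t It <-]; rewrite /interior.
  have [d [d0 [Im Ip]]] := open_interval_pt oI It.
  have l1 : phi (t + d) < phi t by apply: decr => //; rewrite ltrDl.
  have l2 : phi t < phi (t - d) by apply: decr => //; rewrite gtrDl oppr_lt0.
  have tdd : t - d <= t + d by lra.
  near=> k'.
  have a1 : phi (t + d) < k' by near: k'; apply: lt_nbhsr.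
  have a2 : k' < phi (t - d) by near: k'; apply: lt_nbhsl.
  have [c cin pc] : exists2 c, c \in `[t - d, t + d] & phi c = k'.
    apply: IVT => //; first exact: cwithin.
    by rewrite ge_min le_max (ltW a1) (ltW a2) !orbT.
  exists c => //; move: cin; rewrite in_itv /= => /andP[c1 c2].
  exact: (cvx _ _ _ Im Ip c1 c2).
have hder k : (phi @` I) k -> is_derive k 1 h ('D_1 phi (h k))^-1.
  move=> Ik; have [Ih ph] := hP k Ik.
  set t := h k; rewrite -ph.
  apply: is_derive_inverse.
  - near=> s; apply: hK; near: s; exact: (open_nbhs_nbhs (conj oI Ih)).
  - near=> s; apply: cphi; near: s; exact: (open_nbhs_nbhs (conj oI Ih)).
  - exact: derivableP (dphi _ Ih).
  - by rewrite lt_eqF // neg.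
have Ch : forall n, Ck n (phi @` I) h.
  elim => [|n IH].
    split; last done; move=> k Ik; apply: (Ck0_1D oimg) Ik => k' Ik'.
    by case: (hder k' Ik').
  apply: Ck_1D; [exact: oimg | by move=> k Ik; case: (hder k Ik) | ].
  apply: (Ck_local (f := fun k => ('D_1 phi (h k))^-1)); [exact: oimg | | ].
    by move=> k Ik; rewrite (@derive_val _ _ _ _ _ _ _ (hder k Ik)).
  apply: (Ck_comp1 (I := @nz R) (phi := fun s : R => s^-1) (f := fun k => 'D_1 phi (h k)));
    [exact: open_nz | exact: oimg | | exact: Ck_inv | ].
    by move=> k Ik; rewrite /nz /= lt_eqF //; apply: neg; exact: (hP k Ik).1.
  apply: (Ck_comp1 (I := I) (phi := 'D_1 phi) (f := h)); [exact: oI | exact: oimg | | | exact: IH].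
    by move=> k Ik; exact: (hP k Ik).1.
  by have [_ H] := Cphi n.+1; exact: H 1.
by exists h.
Unshelve. all: by end_near.
Qed.

End Frame5.
Section Calc.
Variable R : realType.

Lemma idM (V : normedModType R) (f g : V -> R) t v df dg :
  is_derive t v f df -> is_derive t v g dg ->
  is_derive t v (fun s => f s * g s) (f t * dg + g t * df).
Proof. by move=> H1 H2; exact: (@is_deriveM R V f g t v df dg H1 H2). Qed.

Lemma idD (V : normedModType R) (f g : V -> R) t v df dg :
  is_derive t v f df -> is_derive t v g dg ->
  is_derive t v (fun s => f s + g s) (df + dg).
Proof. by move=> H1 H2; exact: (@is_deriveD R V R f g t v df dg H1 H2). Qed.

Lemma idN (V : normedModType R) (f : V -> R) t v df :
  is_derive t v f df -> is_derive t v (fun s => - f s) (- df).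
Proof. by move=> H1; exact: (@is_deriveN R V R f t v df H1). Qed.

Lemma idC (V : normedModType R) (k : R) (t v : V) :
  is_derive t v (fun _ => k) 0.
Proof. exact: is_derive_cst. Qed.

Lemma idId (t v : R) : is_derive t v (fun s : R => s) v.
Proof. exact: is_derive_id. Qed.

Lemma idComp (V : normedModType R) (phi : R -> R) (f : V -> R) t v dp df :
  is_derive (f t) 1 phi dp -> is_derive t v f df ->
  is_derive t v (fun s => phi (f s)) (dp * df).
Proof.
move=> [H1 <-] [H2 <-].
have [D E] := derive_comp1 H2 H1.
by split => //.
Qed.

Lemma near_pos {T : topologicalType} (f : T -> R) t :
  {for t, continuous f} -> 0 < f t -> \forall s \near t, 0 < f s.
Proof. by move=> cf ft; exact: (cf [set y | 0 < y] (lt_nbhsr ft)). Qed.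

Lemma Ck_lin n (U : set R) (k : R) : open U -> Ck n U (fun t : R => k * t).
Proof. by move=> oU; apply: Ck_mul => //; [apply: Ck_cst | apply: Ck_id]. Qed.

Lemma Ck_expl n (U : set R) (k : R) : open U -> Ck n U (fun t : R => expR (k * t)).
Proof.
move=> oU; apply: (Ck_comp1 (I := setT) (phi := @expR R) (f := fun t => k * t)) => //.
- exact: openT.
- exact: Ck_expR.
- exact: Ck_lin.
Qed.

End Calc.
Section Core.
Variables (R : realType) (a b c d sg : R) (x : R * R).
Hypotheses (b0 : 0 < b) (ba : b < a) (ee : (d - c) * (d - c) = 1) (ss : sg * sg = 1)
  (w1p : 0 < (d - c) * (x.1 - c)) (w1l : (d - c) * (x.1 - c) < 1)
  (w2p : 0 < (d - c) * (x.2 - c)) (w2l : (d - c) * (x.2 - c) < 1).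

Definition w1 := (d - c) * (x.1 - c).
Definition w2 := (d - c) * (x.2 - c).
Definition q1 (t : R) := 1 - w1 * expR (a * t).
Definition q2 (t : R) := 1 - w2 * expR (b * t).
Definition Iset : set R := [set t | 0 < q1 t /\ 0 < q2 t /\
   sg * (w2 * expR (b * t)) < sg * (w1 * expR (a * t))].
Definition phi (t : R) := sg * (ln (q1 t) / a - ln (q2 t) / b).

Lemma a0 : 0 < a. Proof. exact: lt_trans b0 ba. Qed.

Lemma Cq1 n (U : set R) : open U -> Ck n U q1.
Proof.
move=> oU; apply: Ck_sub2 => //; first exact: Ck_cst.
by apply: Ck_mul => //; [exact: Ck_cst | exact: Ck_expl].
Qed.

Lemma Cq2 n (U : set R) : open U -> Ck n U q2.
Proof.
move=> oU; apply: Ck_sub2 => //; first exact: Ck_cst.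
by apply: Ck_mul => //; [exact: Ck_cst | exact: Ck_expl].
Qed.

Lemma Cside n (U : set R) : open U ->
  Ck n U (fun t => sg * (w1 * expR (a * t)) - sg * (w2 * expR (b * t))).
Proof.
move=> oU; apply: Ck_sub2 => //; apply: Ck_mul => //; try exact: Ck_cst;
  (apply: Ck_mul => //; [exact: Ck_cst | exact: Ck_expl]).
Qed.

Lemma open_Iset : open Iset.
Proof.
rewrite openE => t [h1 [h2 h3]]; rewrite /interior.
have T : [set: R] t by [].
have c1 := (Ck_base (Cq1 0 openT) T).1.
have c2 := (Ck_base (Cq2 0 openT) T).1.
have c3 := (Ck_base (Cside 0 openT) T).1.
near=> s; split; [|split].
- by near: s; apply: (near_pos c1).
- by near: s; apply: (near_pos c2).
- rewrite -subr_gt0; near: s.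
  by apply: (near_pos c3); rewrite subr_gt0.
Unshelve. all: by end_near.
Qed.

Lemma sg_cases : sg = 1 \/ sg = -1.
Proof.
have : (sg - 1) * (sg + 1) = 0 by rewrite mulrDr !mulrBl ss; ring.
by move/eqP; rewrite mulf_eq0 subr_eq0 addr_eq0 => /orP[/eqP|/eqP]; [left|right].
Qed.

Lemma expR_split (k u t : R) : expR (k * u) = expR (k * t) * expR (k * (u - t)).
Proof. by rewrite -expRD; congr expR; ring. Qed.

Lemma cvx_Iset t u w : Iset t -> Iset w -> t <= u -> u <= w -> Iset u.
Proof.
rewrite /Iset /q1 /q2 /= => [[h1 [h2 h3]] [k1 [k2 k3]] tu uw].
have a0' := a0.
have Ea : expR (a * u) <= expR (a * w) by rewrite ler_expR ler_pM2l.
have Eb : expR (b * u) <= expR (b * w) by rewrite ler_expR ler_pM2l.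
rewrite -/w1 -/w2 in h1 h2 h3 k1 k2 k3 *.
have w1p' : 0 < w1 by [].
have w2p' : 0 < w2 by [].
split; [nra | split; [nra|]].
case: sg_cases => sgE; rewrite sgE ?mul1r ?mulN1r in h3 k3 *.
- rewrite (expR_split a u t) (expR_split b u t).
  have X : expR (b * (u - t)) <= expR (a * (u - t)).
    rewrite ler_expR -subr_ge0 -mulrBl; apply: mulr_ge0.
      by rewrite subr_ge0 ltW.
    by rewrite subr_ge0.
  rewrite !mulrA; apply: (lt_le_trans (y := w1 * expR (a * t) * expR (b * (u - t)))).
    by rewrite ltr_pM2r // expR_gt0.
  by rewrite ler_pM2l // mulr_gt0 // expR_gt0.
- rewrite (expR_split a u w) (expR_split b u w).
  have X : expR (a * (u - w)) <= expR (b * (u - w)).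
    rewrite ler_expR -subr_ge0 -mulrBl; apply: mulr_le0.
      by rewrite subr_le0 ltW.
    by rewrite subr_le0.
  rewrite ltrN2 in k3; rewrite ltrN2 !mulrA.
  apply: (lt_le_trans (y := w2 * expR (b * w) * expR (a * (u - w)))).
    by rewrite ltr_pM2r // expR_gt0.
  by rewrite ler_pM2l // mulr_gt0 // expR_gt0.
Qed.


Lemma Cphi n : Ck n Iset phi.
Proof.
have oI := open_Iset.
apply: Ck_mul => //; first exact: Ck_cst.
apply: Ck_sub2 => //; apply: Ck_mul => //; try exact: Ck_cst.
- apply: (Ck_comp1 (I := @pos R) (phi := @ln R) (f := q1));
    [exact: open_pos | exact: oI | by move=> t [] | exact: Ck_ln | exact: Cq1].
- apply: (Ck_comp1 (I := @pos R) (phi := @ln R) (f := q2));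
    [exact: open_pos | exact: oI | by move=> t [_ []] | exact: Ck_ln | exact: Cq2].
Qed.

Lemma dq1 (t : R) : is_derive t 1 q1 (- (w1 * (expR (a * t) * a))).
Proof.
have H := idD (idC 1 t 1) (idN (idM (idC w1 t 1) (idComp (is_derive_expR (a * t)) (idM (idC a t 1) (idId t 1))))).
apply: is_derive_eq H _.
by rewrite /= add0r mulr0 addr0 mulr1 mulr0 addr0.
Qed.

Lemma dq2 (t : R) : is_derive t 1 q2 (- (w2 * (expR (b * t) * b))).
Proof.
have H := idD (idC 1 t 1) (idN (idM (idC w2 t 1) (idComp (is_derive_expR (b * t)) (idM (idC b t 1) (idId t 1))))).
apply: is_derive_eq H _.
by rewrite /= add0r mulr0 addr0 mulr1 mulr0 addr0.
Qed.

Lemma dphi_neg (t : R) : Iset t -> 'D_1 phi t < 0.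
Proof.
move=> [h1 [h2 h3]].
have H := idM (idC sg t 1) (idD (idM (idComp (is_derive1_ln h1) (dq1 t)) (idC a^-1 t 1))
          (idN (idM (idComp (is_derive1_ln h2) (dq2 t)) (idC b^-1 t 1)))).
rewrite (@derive_val _ _ _ _ _ _ _ H) /= !mulr0 !add0r addr0.
rewrite /q1 /q2 in h1 h2 *.
move: h1 h2 h3; set Y1 := w1 * expR (a * t); set Y2 := w2 * expR (b * t); move=> h1 h2 h3.
rewrite [w1 * _]mulrA [w2 * _]mulrA -/Y1 -/Y2.
have an : a != 0 by rewrite gt_eqF // a0.
have bn : b != 0 by rewrite gt_eqF.
have q1n : 1 - Y1 != 0 by rewrite gt_eqF.
have q2n : 1 - Y2 != 0 by rewrite gt_eqF.
have -> : sg * (a^-1 * ((1 - Y1)^-1 * - (Y1 * a)) - b^-1 * ((1 - Y2)^-1 * - (Y2 * b))) =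
   (sg * Y2 - sg * Y1) / ((1 - Y1) * (1 - Y2)).
  rewrite /Y1 /Y2; field.
  by rewrite -/Y1 -/Y2 q1n q2n an bn.
by rewrite pmulr_llt0 ?invr_gt0 ?mulr_gt0 // subr_lt0.
Qed.


Lemma expR_ln (y : R) : 0 < y -> expR (ln y) = y.
Proof. by move=> y0; apply/eqP; rewrite lnK_eq. Qed.

Lemma ln_mul (y z : R) : 0 < y -> 0 < z -> ln (y * z) = ln y + ln z.
Proof. by move=> y0 z0; rewrite lnM // posrE. Qed.

Definition u1 (z : R * R) := (d - c) * (d - z.1).
Definition u2 (z : R * R) := (d - c) * (d - z.2).
Definition J (z : R * R) := sg * (ln (u1 z) / a - ln (u2 z) / b).
Definition Pset : set (R * R) := [set z | 0 < u1 z /\ 0 < u2 z].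
Definition Fm (p : R * R) : R * R :=
  (d + (c + (x.1 - c) * expR (a * p.2) - d) * expR (a * p.1),
   d + (c + (x.2 - c) * expR (b * p.2) - d) * expR (b * p.1)).
Definition W0 : set (R * R) := [set z | 0 < u1 z /\ 0 < u2 z /\ (phi @` Iset) (J z)].
Definition tG (h : R -> R) z := h (J z).
Definition sG (h : R -> R) z := (ln (u1 z) - ln (q1 (tG h z))) / a.
Definition G (h : R -> R) z := (sG h z, tG h z).

Lemma Cu1 n (U : set (R * R)) : open U -> Ck n U u1.
Proof.
move=> oU; apply: Ck_mul => //; first exact: Ck_cst.
by apply: Ck_sub2 => //; [exact: Ck_cst | exact: Ck_fst].
Qed.

Lemma Cu2 n (U : set (R * R)) : open U -> Ck n U u2.
Proof.
move=> oU; apply: Ck_mul => //; first exact: Ck_cst.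
by apply: Ck_sub2 => //; [exact: Ck_cst | exact: Ck_snd].
Qed.

Lemma open_Pset : open Pset.
Proof.
rewrite openE => z [h1 h2]; rewrite /interior.
have T : [set: R * R] z by [].
have c1 := (Ck_base (Cu1 0 openT) T).1.
have c2 := (Ck_base (Cu2 0 openT) T).1.
near=> s; split.
- by near: s; apply: (near_pos c1).
- by near: s; apply: (near_pos c2).
Unshelve. all: by end_near.
Qed.

Lemma CJ n : Ck n Pset J.
Proof.
have oP := open_Pset.
apply: Ck_mul => //; first exact: Ck_cst.
apply: Ck_sub2 => //; apply: Ck_mul => //; try exact: Ck_cst.
- apply: (Ck_comp1 (I := @pos R) (phi := @ln R) (f := u1));
    [exact: open_pos | exact: oP | by move=> t [] | exact: Ck_ln | exact: Cu1].
- apply: (Ck_comp1 (I := @pos R) (phi := @ln R) (f := u2));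
    [exact: open_pos | exact: oP | by move=> t [] | exact: Ck_ln | exact: Cu2].
Qed.

Lemma open_W0 : open (phi @` Iset) -> open W0.
Proof.
move=> oimg; rewrite openE => z [h1 [h2 h3]]; rewrite /interior.
have T : [set: R * R] z by [].
have c1 := (Ck_base (Cu1 0 openT) T).1.
have c2 := (Ck_base (Cu2 0 openT) T).1.
have c3 := (Ck_base (CJ 0) (conj h1 h2)).1.
have n3 := c3 _ (open_nbhs_nbhs (conj oimg h3)).
near=> s; split; [|split].
- by near: s; apply: (near_pos c1).
- by near: s; apply: (near_pos c2).
- by near: s; exact: n3.
Unshelve. all: by end_near.
Qed.

Lemma ee_trick (l r k : R) : l - r = ((d - c) * (d - c) - 1) * k -> l = r.
Proof. by move=> H; apply/eqP; rewrite -subr_eq0 H ee subrr mul0r. Qed.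

Lemma CFm n (U : set (R * R)) : open U -> Ck n U Fm.
Proof.
move=> oU.
have CE k (f : R * R -> R) : Ck n U f -> Ck n U (fun p => expR (k * f p)).
  move=> Cf; apply: (Ck_comp1 (I := setT) (phi := @expR R) (f := fun p => k * f p));
    [exact: openT | exact: oU | by [] | exact: Ck_expR | ].
  by apply: Ck_mul => //; exact: Ck_cst.
apply: Ck_pair => //; apply: Ck_add => //; try exact: Ck_cst;
  (apply: Ck_mul => //; [|apply: CE; first by [exact: Ck_fst]]);
  (apply: Ck_sub2 => //; [|exact: Ck_cst]);
  (apply: Ck_add => //; [exact: Ck_cst|]);
  (apply: Ck_mul => //; [exact: Ck_cst| apply: CE; exact: Ck_snd]).
Qed.


Lemma tG_in (h : R -> R) : (forall t, Iset t -> h (phi t) = t) ->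
  forall z, W0 z -> Iset (tG h z) /\ phi (tG h z) = J z.
Proof. by move=> hK z [_ [_ [t0 It0 pt]]]; rewrite /tG -pt hK. Qed.

Lemma CG (h : R -> R) n : open (phi @` Iset) -> (forall t, Iset t -> h (phi t) = t) ->
  (forall n, Ck n (phi @` Iset) h) -> Ck n W0 (G h).
Proof.
move=> oimg hK Ch.
have oW := open_W0 oimg.
have CtG : Ck n W0 (tG h).
  apply: (Ck_comp1 (I := phi @` Iset) (phi := h) (f := J));
    [exact: oimg | exact: oW | by move=> z [_ [_]] | exact: Ch | ].
  by apply: Ck_sub (CJ n) => z [h1 [h2 _]].
apply: Ck_pair => //.
apply: Ck_mul => //; last exact: Ck_cst.
apply: Ck_sub2 => //.
  apply: (Ck_comp1 (I := @pos R) (phi := @ln R) (f := u1));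
    [exact: open_pos | exact: oW | by move=> t [] | exact: Ck_ln | exact: Cu1].
apply: (Ck_comp1 (I := Iset) (phi := fun t => ln (q1 t)) (f := tG h));
  [exact: open_Iset | exact: oW | by move=> z Wz; case: (tG_in hK Wz) | | exact: CtG].
apply: (Ck_comp1 (I := @pos R) (phi := @ln R) (f := q1));
  [exact: open_pos | exact: open_Iset | by move=> t [] | exact: Ck_ln | exact: (Cq1 _ open_Iset)].
Qed.

Lemma u1Fm p : u1 (Fm p) = q1 p.2 * expR (a * p.1).
Proof. by apply: (ee_trick (k := expR (a * p.1))); rewrite /u1 /q1 /w1 /Fm /=; ring. Qed.

Lemma u2Fm p : u2 (Fm p) = q2 p.2 * expR (b * p.1).
Proof. by apply: (ee_trick (k := expR (b * p.1))); rewrite /u2 /q2 /w2 /Fm /=; ring. Qed.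

Lemma an : a != 0. Proof. by rewrite gt_eqF // a0. Qed.
Lemma bn : b != 0. Proof. by rewrite gt_eqF. Qed.

Lemma JFm p : Iset p.2 -> J (Fm p) = phi p.2.
Proof.
move=> [h1 [h2 _]].
rewrite /J u1Fm u2Fm !ln_mul ?expR_gt0 // !expRK /phi; congr (sg * _).
have := an; have := bn; move=> bn' an'.
by rewrite !mulrDl [a * _]mulrC [b * _]mulrC !mulfK //; ring.
Qed.

Lemma GFm (h : R -> R) : (forall t, Iset t -> h (phi t) = t) ->
  forall p, Iset p.2 -> W0 (Fm p) /\ G h (Fm p) = p.
Proof.
move=> hK [s t] It.
have [h1 [h2 _]] := It.
split.
  split; first by rewrite u1Fm mulr_gt0 // expR_gt0.
  split; first by rewrite u2Fm mulr_gt0 // expR_gt0.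
  by exists t => //; rewrite JFm.
rewrite /G /sG /tG JFm // hK // u1Fm ln_mul ?expR_gt0 // expRK /=.
have := an => an'.
by rewrite addrC addKr [a * _]mulrC mulfK.
Qed.

Lemma FmG (h : R -> R) : (forall t, Iset t -> h (phi t) = t) ->
  forall z, W0 z -> Fm (G h z) = z.
Proof.
move=> hK z Wz.
have [It pt] := tG_in hK Wz.
have [h1 [h2 _]] := It.
have [z1 [z2 _]] := Wz.
move: It pt h1 h2; rewrite /G; set t := tG h z; set s := sG h z => It pt h1 h2.
have an' := an; have bn' := bn.
have sgn : sg != 0 by apply/eqP => s0; move: ss; rewrite s0 mul0r => /eqP; rewrite eq_sym oner_eq0.
have E1 : a * s = ln (u1 z) - ln (q1 t) by rewrite /s /sG -/t mulrC divfK.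
have E : ln (u1 z) / a - ln (u2 z) / b = ln (q1 t) / a - ln (q2 t) / b.
  by apply: (mulfI sgn); rewrite -/(J z) -pt.
have E2 : b * s = ln (u2 z) - ln (q2 t).
  have Es : s = (ln (u1 z) - ln (q1 t)) / a by rewrite -E1 [a * s]mulrC mulfK.
  have E' : (ln (u1 z) - ln (q1 t)) / a = (ln (u2 z) - ln (q2 t)) / b.
    by rewrite !mulrBl; lra.
  by rewrite Es E' mulrC divfK.
have K1 : q1 t * expR (a * s) = u1 z.
  by rewrite E1 expRD expRN !expR_ln // mulrCA divff ?mulr1 // gt_eqF.
have K2 : q2 t * expR (b * s) = u2 z.
  by rewrite E2 expRD expRN !expR_ln // mulrCA divff ?mulr1 // gt_eqF.
have F1 : d + (c + (x.1 - c) * expR (a * t) - d) * expR (a * s) = d - (d - c) * (q1 t * expR (a * s)).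
  by apply: (ee_trick (k := - ((x.1 - c) * expR (a * t) * expR (a * s)))); rewrite /q1 /w1; ring.
have F2 : d + (c + (x.2 - c) * expR (b * t) - d) * expR (b * s) = d - (d - c) * (q2 t * expR (b * s)).
  by apply: (ee_trick (k := - ((x.2 - c) * expR (b * t) * expR (b * s)))); rewrite /q2 /w2; ring.
have Z1 : z.1 = d - (d - c) * u1 z by apply: (ee_trick (k := d - z.1)); rewrite /u1; ring.
have Z2 : z.2 = d - (d - c) * u2 z by apply: (ee_trick (k := d - z.2)); rewrite /u2; ring.
rewrite /Fm /= F1 F2 K1 K2 -Z1 -Z2.
exact: (esym (surjective_pairing z)).
Qed.


Lemma core (A : set (R * R)) : open A -> (forall p, A p -> Iset p.2) ->
  diffeo_onto A Fm.
Proof.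
move=> oA AI.
have [h [oimg hK Ch]] := inv1D open_Iset cvx_Iset Cphi dphi_neg.
have oW := open_W0 oimg.
have img : Fm @` A = [set z | W0 z /\ A (G h z)].
  apply/seteqP; split.
    move=> z [p Ap <-]; have [W GF] := GFm hK (AI p Ap).
    by split => //; rewrite GF.
  move=> z [Wz AG]; exists (G h z); first exact: AG.
  exact: (FmG hK Wz).
split.
- exact: oA.
- rewrite img openE => z [Wz AGz]; rewrite /interior.
  have cG := (Ck_base (CG 0 oimg hK Ch) Wz).1.
  have nA := cG _ (open_nbhs_nbhs (conj oA AGz)).
  near=> z'; split.
    by near: z'; exact: (open_nbhs_nbhs (conj oW Wz)).
  by near: z'; exact: nA.
- move=> p q Ap Aq E.
  by rewrite -(GFm hK (AI p Ap)).2 E (GFm hK (AI q Aq)).2.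
- by apply: smooth_of_Ck => n; exact: CFm.
- exists (G h); split.
  + by move=> p Ap; exact: (GFm hK (AI p Ap)).2.
  + by move=> y [p Ap <-]; rewrite (GFm hK (AI p Ap)).2.
  + apply: smooth_of_Ck => n; apply: Ck_sub (CG n oimg hK Ch).
    by rewrite img => z [].
Unshelve. all: by end_near.
Qed.

End Core.
Section Final.
Variable R : realType.

Lemma ball_pt (y : R * R) (e : R) (z : R * R) : 0 < e ->
  `|y.1 - z.1| < e -> `|y.2 - z.2| < e -> ball y e z.
Proof. by move=> e0 h1 h2; split. Qed.

Lemma intG (a b : R) (y : R * R) : interior (Gamma a b) y ->
  (0 < y.1 /\ y.1 < 1) /\ (0 < y.2 /\ y.2 < 1).
Proof.
rewrite /interior => /nbhs_ballP [e /= e0 H].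
have he0 : 0 < e / 2 by rewrite divr_gt0.
have he : e / 2 < e by rewrite ltr_pdivrMr // ltr_pMr // ltr1n.
have nn : `|e / 2| < e by rewrite ger0_norm // ltW.
have n0 : `|0 : R| < e by rewrite normr0.
have B1 : Gamma a b (y.1 - e / 2, y.2).
  by apply: H; apply: ball_pt => //=; rewrite ?subrr // opprB addrC subrK.
have B2 : Gamma a b (y.1 + e / 2, y.2).
  by apply: H; apply: ball_pt => //=; rewrite ?subrr // opprD addrA subrr sub0r normrN.
have B3 : Gamma a b (y.1, y.2 - e / 2).
  by apply: H; apply: ball_pt => //=; rewrite ?subrr // opprB addrC subrK.
have B4 : Gamma a b (y.1, y.2 + e / 2).
  by apply: H; apply: ball_pt => //=; rewrite ?subrr // opprD addrA subrr sub0r normrN.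
move: B1 B2 B3 B4; rewrite /Gamma /= => [[_ [P1 _]] [_ [_ P2]] [/andP[P3 _] _] [/andP[_ P4] _]].
have := powR_ge0 y.2 (a / b); have := powR_ge0 (1 - y.2) (a / b) => Q1 Q2.
split; split; lra.
Qed.


Lemma CY1 n (a c : R) (x : R * R) (U : set (R * R)) : open U ->
  Ck n U (fun p : R * R => c + (x.1 - c) * expR (a * p.2)).
Proof.
move=> oU; apply: Ck_add => //; first exact: Ck_cst.
apply: Ck_mul => //; first exact: Ck_cst.
apply: (Ck_comp1 (I := setT) (phi := @expR R) (f := fun p : R * R => a * p.2));
  [exact: openT | exact: oU | by [] | exact: Ck_expR | ].
by apply: Ck_mul => //; [exact: Ck_cst | exact: Ck_snd].
Qed.

Lemma CY2 n (b c : R) (x : R * R) (U : set (R * R)) : open U ->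
  Ck n U (fun p : R * R => c + (x.2 - c) * expR (b * p.2)).
Proof.
move=> oU; apply: Ck_add => //; first exact: Ck_cst.
apply: Ck_mul => //; first exact: Ck_cst.
apply: (Ck_comp1 (I := setT) (phi := @expR R) (f := fun p : R * R => b * p.2));
  [exact: openT | exact: oU | by [] | exact: Ck_expR | ].
by apply: Ck_mul => //; [exact: Ck_cst | exact: Ck_snd].
Qed.

Lemma open_RL (a b : R) (i : bool) (x : R * R) (sgn : bool) :
  open [set st | T2 a b i x st /\ (interior (Gamma a b) (Psi a b i st.2 x) /\
     (if sgn then (Psi a b i st.2 x).2 < (Psi a b i st.2 x).1
      else (Psi a b i st.2 x).1 < (Psi a b i st.2 x).2))].
Proof.
rewrite openE => p [[s0 [t0 IF]] [IY sd]]; rewrite /interior.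
have T : [set: R * R] p by [].
have cF := (Ck_base (CFm a b (vtx R i) (vtx R (~~ i)) x 0 openT) T).1.
have cY := (Ck_base (Ck_pair openT (CY1 0 a (vtx R i) x openT) (CY2 0 b (vtx R i) x openT)) T).1.
have cD1 := (Ck_base (Ck_sub2 openT (CY1 0 a (vtx R i) x openT) (CY2 0 b (vtx R i) x openT)) T).1.
have cD2 := (Ck_base (Ck_sub2 openT (CY2 0 b (vtx R i) x openT) (CY1 0 a (vtx R i) x openT)) T).1.
have nF := cF _ (open_nbhs_nbhs (conj (open_interior _) IF)).
have nY := cY _ (open_nbhs_nbhs (conj (open_interior _) IY)).
have nD : \forall q \near p, if sgn then (Psi a b i q.2 x).2 < (Psi a b i q.2 x).1
      else (Psi a b i q.2 x).1 < (Psi a b i q.2 x).2.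
  case: sgn sd => sd.
    have H1 := near_pos cD1 (ltac:(rewrite subr_gt0; exact: sd)).
    by apply: filterS H1 => q /=; rewrite subr_gt0.
  have H1 := near_pos cD2 (ltac:(rewrite subr_gt0; exact: sd)).
  by apply: filterS H1 => q /=; rewrite subr_gt0.
near=> q; split; [split; [|split] | split].
- near: q; exact: (near_pos (@cont_fst R p) s0).
- near: q; exact: (near_pos (@cont_snd R p) t0).
- by near: q; exact: nF.
- by near: q; exact: nY.
- by near: q; exact: nD.
Unshelve. all: by end_near.
Qed.

End Final.


Lemma Iset_of (R : realType) (alpha beta : R) (i : bool) (x : R * R) (sgn : bool) (p : R * R) :
  (vtx R i = 0 /\ vtx R (~~ i) = 1) \/ (vtx R i = 1 /\ vtx R (~~ i) = 0) ->
  interior (Gamma alpha beta) (Psi alpha beta i p.2 x) ->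
  (if sgn then (Psi alpha beta i p.2 x).2 < (Psi alpha beta i p.2 x).1
   else (Psi alpha beta i p.2 x).1 < (Psi alpha beta i p.2 x).2) ->
  Iset alpha beta (vtx R i) (vtx R (~~ i))
    (if sgn then vtx R (~~ i) - vtx R i else - (vtx R (~~ i) - vtx R i)) x p.2.
Proof.
move=> cd IY sd.
have [[y1p y1l] [y2p y2l]] := intG IY.
move: y1p y1l y2p y2l sd.
rewrite /Iset /q1 /q2 /w1 /w2 /Psi /=.
set E1 := expR (alpha * p.2); set E2 := expR (beta * p.2).
case: cd => [[-> ->]|[-> ->]] y1p y1l y2p y2l sd; case: sgn sd => sd; (split; [|split]); lra.
Qed.

Unset Implicit Arguments.

Theorem lemma6p1 (R : realType) (alpha beta : R) :
  0 < beta -> beta < alpha ->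
  forall (x : R * R) (i : bool),
    interior (Gamma alpha beta) x ->
    diffeo_onto (Rset alpha beta i x) (fun st => Psi2 alpha beta i st.1 st.2 x) /\
    diffeo_onto (Lset alpha beta i x) (fun st => Psi2 alpha beta i st.1 st.2 x).
Proof.
move=> b0 ba x i Ix.
have [[x1p x1l] [x2p x2l]] := intG Ix.
have cd : (vtx R i = 0 /\ vtx R (~~ i) = 1) \/ (vtx R i = 1 /\ vtx R (~~ i) = 0).
  by case: i {Ix}; [right|left]; rewrite /vtx /=.
have ee : (vtx R (~~ i) - vtx R i) * (vtx R (~~ i) - vtx R i) = 1.
  by case: cd => [[-> ->]|[-> ->]]; lra.
have w1p : 0 < (vtx R (~~ i) - vtx R i) * (x.1 - vtx R i).
  by case: cd => [[-> ->]|[-> ->]]; lra.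
have w2p : 0 < (vtx R (~~ i) - vtx R i) * (x.2 - vtx R i).
  by case: cd => [[-> ->]|[-> ->]]; lra.
have FE : (fun st : R * R => Psi2 alpha beta i st.1 st.2 x) =
          Fm alpha beta (vtx R i) (vtx R (~~ i)) x by [].
rewrite FE; split.
- apply: (@core R alpha beta (vtx R i) (vtx R (~~ i)) (vtx R (~~ i) - vtx R i) x b0 ba ee ee w1p w2p).
    exact (open_RL (a:=alpha) (b:=beta) (i:=i) (x:=x) (sgn:=true)).
  move=> p [_ [IY sd]].
  exact (Iset_of (sgn:=true) cd IY sd).
- have ee' : (- (vtx R (~~ i) - vtx R i)) * (- (vtx R (~~ i) - vtx R i)) = 1 by rewrite mulrNN.
  apply: (@core R alpha beta (vtx R i) (vtx R (~~ i)) (- (vtx R (~~ i) - vtx R i)) x b0 ba ee ee' w1p w2p).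
    exact (open_RL (a:=alpha) (b:=beta) (i:=i) (x:=x) (sgn:=false)).
  move=> p [_ [IY sd]].
  exact (Iset_of (sgn:=false) cd IY sd).
Qed.
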